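(* Let $\Phi$ be an irreducible crystallographic root system and $k$ a positive integer. If $R$ is a bounded dominant region of the $k$-Catalan arrangement of $\Phi$, then the pseudomaximal alcove of $R$ is equal to the maximal alcove of $R$.
   Context: $\Phi$ lives in a Euclidean space $V$ with inner product $\langle\cdot,\cdot\rangle$, simple system $S$, positive system $\Phi^+$. $H_\alpha^r=\{x\mid\langle x,\alpha\rangle=r\}$. The $K$-Catalan arrangement consists of $H_\alpha^r$, $\alpha\in\Phi$, $r\in\{0,\ldots,K\}$; regions are components of its complement, dominant if $\langle x,\alpha\rangle>0$ for all $\alpha\in\Phi^+$, $x\in R$. Alcoves are the connected components of the complement of all $H_\alpha^r$, $\alpha\in\Phi$, $r\in\mathbb{Z}$; for an alcove $A$ and $\alpha\in\Phi^+$, $r(A,\alpha)$ is the unique integer $r$ with $r-1<\langle x,\alpha\rangle<r$ for all $x\in A$. Root poset: $\alpha\le\beta$ iff $\beta-\alpha$ is a nonnegative integer combination of $S$; ideals are down-closed. For a dominant region $R$ of the $K$-Catalan arrangement, $\theta(R)=(I_1,\ldots,I_K)$ with $I_i=\{\alpha\in\Phi^+\mid\langle x,\alpha\rangle<i\ \forall x\in R\}$; $\theta$ is known to be a bijection onto geometric chains of $K$ ideals (chains $I_1\subseteq\cdots\subseteq I_K$ with $J_i=\Phi^+\setminus I_i$ such that $(I_i+I_j)\cap\Phi^+\subseteq I_{i+j}$ for $i+j\le K$ and $(J_i+J_j)\cap\Phi^+\subseteq J_{i+j}$ for $i,j\in\{0,\ldots,K\}$, with $I_0=\varnothing$, $J_0=\Phi^+$,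 $J_i=J_K$ for $i>K$), and bounded regions correspond to positive chains ($S\subseteq I_K$). For a chain $\mathcal{I}$ of $K$ ideals, $r_\alpha(\mathcal{I})=\min\{r_1+\cdots+r_m\mid\alpha=\alpha_1+\cdots+\alpha_m,\alpha_i\in I_{r_i}\}$ ($\infty$ if none). For a bounded dominant region $R$ with $\mathcal{I}=\theta(R)$, its maximal alcove is the (known to exist and lie in $R$) alcove $B$ with $r(B,\alpha)=r_\alpha(\mathcal{I})$ for all $\alpha\in\Phi^+$. For any dominant region $R$ of the $k$-Catalan arrangement with $\mathcal{I}=\theta(R)$, let $\underline{\mathcal{I}}=(I_1,\ldots,I_k,\underline{I}_{k+1})$ with $\underline{I}_{k+1}=\bigcup_{i+j=k+1}((I_i+I_j)\cap\Phi^+)\cup I_k\cup S$; this is a positive geometric chain of $k+1$ ideals, and the pseudomaximal alcove of $R$ is the maximal alcove of the bounded dominant region $\theta^{-1}(\underline{\mathcal{I}})$ of the $(k+1)$-Catalan arrangement. *)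

(* Defs.v *)
From HB Require Import structures.
From mathcomp Require Import all_boot all_order all_algebra.
From mathcomp Require Import all_classical all_reals all_analysis.
Set Implicit Arguments. Unset Strict Implicit. Unset Printing Implicit Defensive.
Import Order.TTheory GRing.Theory Num.Theory.
Import numFieldNormedType.Exports.
Local Open Scope classical_set_scope.
Local Open Scope ring_scope.

Section RootDefs.
Variables (R : realType) (n : nat).
Notation V := 'rV[R]_n.

Definition dot (u v : V) : R := (u *m v^T) 0 0.

Definition refl (a x : V) : V := x - ((2 * dot x a) / dot a a) *: a.

Definition spans (Phi : seq V) : Prop :=
  forall x : V, exists c : 'I_(size Phi) -> R, x = \sum_(i < size Phi) c i *: Phi`_i.

Definition is_root_system (Phi : seq V) : Prop :=
  [/\ (0 : V) \notin Phi, spans Phi,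
      (forall a b, a \in Phi -> b \in Phi -> refl a b \in Phi) &
      (forall a (c : R), a \in Phi -> c *: a \in Phi -> c = 1 \/ c = -1)].

Definition crystallographic (Phi : seq V) : Prop :=
  forall a b, a \in Phi -> b \in Phi -> exists z : int, 2 * dot a b / dot b b = z%:~R.

Definition irreducible_rs (Phi : seq V) : Prop :=
  forall P : V -> Prop,
    (exists2 a, a \in Phi & P a) -> (exists2 a, a \in Phi & ~ P a) ->
    exists a b, [/\ a \in Phi, b \in Phi, P a, ~ P b & dot a b != 0].

Definition nonneg_int_comb (S : seq V) (x : V) : Prop :=
  exists c : 'I_(size S) -> nat, x = \sum_(i < size S) (c i)%:R *: S`_i.

Definition lin_indep (S : seq V) : Prop :=
  forall c : 'I_(size S) -> R, \sum_(i < size S) c i *: S`_i = 0 -> forall i, c i = 0.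

Definition simple_system (Phi S : seq V) : Prop :=
  [/\ {subset S <= Phi}, lin_indep S &
      forall a, a \in Phi -> nonneg_int_comb S a \/ nonneg_int_comb S (- a)].

Definition positive_root (Phi S : seq V) (a : V) : Prop :=
  a \in Phi /\ nonneg_int_comb S a.

Definition catalan_complement (Phi : seq V) (K : nat) : set V :=
  [set x | forall a r, a \in Phi -> (r <= K)%N -> dot x a != r%:R].

Definition catalan_region (Phi : seq V) (K : nat) (Rg : set V) : Prop :=
  exists2 x, catalan_complement Phi K x &
    Rg = connected_component (catalan_complement Phi K) x.

Definition dominant (Phi S : seq V) (Rg : set V) : Prop :=
  forall x a, Rg x -> positive_root Phi S a -> 0 < dot x a.

Definition affine_complement (Phi : seq V) : set V :=
  [set x | forall a (r : int), a \in Phi -> dot x a != r%:~R].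

Definition alcove (Phi : seq V) (B : set V) : Prop :=
  exists2 x, affine_complement Phi x & B = connected_component (affine_complement Phi) x.

Definition alcove_r (B : set V) (a : V) (r : int) : Prop :=
  forall x, B x -> r%:~R - 1 < dot x a < r%:~R.

(* --- chains of ideals, indexed 1..K --- *)
Definition theta (Phi S : seq V) (Rg : set V) (i : nat) : set V :=
  [set a | positive_root Phi S a /\ forall x, Rg x -> dot x a < i%:R].

Definition chain_eq (K : nat) (I J : nat -> set V) : Prop :=
  forall i, (1 <= i <= K)%N -> I i = J i.

Definition r_achievable (K : nat) (I : nat -> set V) (a : V) (s : nat) : Prop :=
  exists (als : seq V) (rs : seq nat),
    [/\ size als = size rs,
        all (fun r => (1 <= r <= K)%N) rs,
        (forall j, (j < size als)%N -> I (nth 0%N rs j) (nth 0 als j)),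
        a = \sum_(b <- als) b &
        s = sumn rs].

Definition r_alpha (K : nat) (I : nat -> set V) (a : V) (s : nat) : Prop :=
  r_achievable K I a s /\ forall s', r_achievable K I a s' -> (s <= s')%N.

Definition maximal_alcove (Phi S : seq V) (K : nat) (Rg B : set V) : Prop :=
  alcove Phi B /\
  forall a, positive_root Phi S a ->
    exists2 s, r_alpha K (theta Phi S Rg) a s & alcove_r B a (Posz s).

Definition underline_chain (Phi S : seq V) (k : nat) (I : nat -> set V) (i : nat) : set V :=
  if (i <= k)%N then I i else
  [set x | (exists i1 i2 a b, [/\ (1 <= i1)%N && (1 <= i2)%N, (i1 + i2 = k.+1)%N,
                                   I i1 a, I i2 b & x = a + b] /\ positive_root Phi S x)
           \/ I k x \/ x \in S].

Definition pseudomaximal_alcove (Phi S : seq V) (k : nat) (Rg B : set V) : Prop :=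
  exists Rg' : set V,
    [/\ catalan_region Phi k.+1 Rg', dominant Phi S Rg', bounded_set Rg',
        chain_eq k.+1 (theta Phi S Rg') (underline_chain Phi S k (theta Phi S Rg)) &
        maximal_alcove Phi S k.+1 Rg' B].

End RootDefs.

(* Main.v *)
Require Import Defs.
From HB Require Import structures.
From mathcomp Require Import all_boot all_order all_algebra.
From mathcomp Require Import all_classical all_reals all_analysis.
From mathcomp Require Import zify ring lra.
Import Order.TTheory GRing.Theory Num.Theory.
Import numFieldNormedType.Exports.
Local Open Scope classical_set_scope.
Local Open Scope ring_scope.

Section A.
Variables (R : realType) (n : nat).
Implicit Types x y a : 'rV[R]_n.

Lemma dot_sum x a : dot x a = \sum_j x 0 j * a 0 j.
Proof. rewrite /dot mxE; apply: eq_bigr => j _; by rewrite mxE. Qed.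
Lemma dotDl x y a : dot (x + y) a = dot x a + dot y a.
Proof. by rewrite /dot mulmxDl mxE. Qed.
Lemma dotZl (t : R) x a : dot (t *: x) a = t * dot x a.
Proof. by rewrite /dot -scalemxAl mxE. Qed.
Lemma dotNr x a : dot x (- a) = - dot x a.
Proof.
rewrite !dot_sum -sumrN; apply: eq_bigr => j _; by rewrite mxE mulrN.
Qed.
Lemma dotBl x y a : dot (x - y) a = dot x a - dot y a.
Proof.
rewrite !dot_sum -sumrB; apply: eq_bigr => j _; by rewrite !mxE mulrBl.
Qed.

Lemma seg_conn x y :
  connected ((fun t : R => x + t *: (y - x)) @` `[0, 1]).
Proof.
apply: connected_continuous_connected; first exact: segment_connected.
apply: continuous_subspaceT => t.
apply: cvgD; first exact: cvg_cst.
apply: cvgZr_tmp. exact: cvg_id.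
Qed.

Lemma no_int_between (r z : int) : ~ (((r%:~R : R) - 1) < (z%:~R : R) < (r%:~R : R)).
Proof.
move=> /andP[h1 h2].
have h1' : (r - 1 < z)%R by rewrite -(ltr_int R) intrB.
rewrite ltr_int in h2.
lia.
Qed.
End A.

Section B.
Variables (R : realType) (n : nat).
Implicit Types x y a : 'rV[R]_n.

Lemma dot_self_neq0 a : a != 0 -> dot a a != 0.
Proof.
move=> a0; rewrite dot_sum; apply/negP => /eqP.
move/eqP; rewrite psumr_eq0; last by move=> j _; rewrite -expr2 sqr_ge0.
move/allP => h; move/negP: a0; apply; apply/eqP/rowP => j.
have := h j (mem_index_enum _); rewrite /= mulf_eq0 orbb => /eqP ->.
by rewrite mxE.
Qed.

Lemma root_neg (Phi : seq 'rV[R]_n) a : is_root_system Phi -> a \in Phi -> - a \in Phi.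
Proof.
case=> h0 _ hr _ ha.
have := hr a a ha ha; rewrite /refl.
have a0 : a != 0 by apply: contraNneq h0 => <-.
rewrite -mulrA divff ?dot_self_neq0 // mulr1.
by rewrite scalerDl scale1r opprD addrA subrr add0r.
Qed.

Lemma alcove_sub (Phi S : seq 'rV[R]_n) (B1 B2 : set 'rV[R]_n) :
  is_root_system Phi -> simple_system Phi S -> alcove Phi B2 ->
  (forall a, positive_root Phi S a -> exists r, alcove_r B1 a r /\ alcove_r B2 a r) ->
  B1 `<=` B2.
Proof.
move=> rs [_ _ ss] [x2 Ax2 ->] hr y B1y.
have B2x2 : connected_component (affine_complement Phi) x2 x2
  by exact: connected_component_refl.
set f := fun t : R => x2 + t *: (y - x2).
apply: (@connected_component_max _ _ (f @` `[0, 1])).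
- exists 0; first by rewrite /= in_itv /= lexx ler01.
  by rewrite /f scale0r addr0.
- move=> z [t]; rewrite /= in_itv /= => /andP[t0 t1] <-.
  move=> a r aP; rewrite /f dotDl dotZl dotBl.
  have conv : forall b (r0 : int), alcove_r B1 b r0 -> alcove_r (connected_component (affine_complement Phi) x2) b r0 ->
     (r0%:~R : R) - 1 < dot x2 b + t * (dot y b - dot x2 b) < r0%:~R.
    move=> b r0 h1 h2; have /andP[u1 u2] := h2 _ B2x2; have /andP[v1 v2] := h1 _ B1y.
    have [uv|uv] := leP (dot x2 b) (dot y b); apply/andP; split; nra.
  case: (ss a aP) => hc.
  + have [r0 [h1 h2]] := hr a (conj aP hc).
    apply/eqP => e; apply: (@no_int_between R r0 r); rewrite -e; exact: conv.
  + have naP : - a \in Phi by exact: root_neg.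
    have [r0 [h1 h2]] := hr (- a) (conj naP hc).
    apply/eqP => e; apply: (@no_int_between R r0 (- r)).
    have := conv _ r0 h1 h2; rewrite !dotNr.
    have -> : - dot x2 a + t * (- dot y a - - dot x2 a) = - (dot x2 a + t * (dot y a - dot x2 a)) by ring.
    by rewrite e intrN.
- exact: seg_conn.
- exists 1; first by rewrite /= in_itv /= lexx ler01.
  by rewrite /f scale1r addrC subrK.
Qed.
End B.
Section C.
Variables (R : realType) (n : nat) (Phi S : seq 'rV[R]_n).
Implicit Types x y a b : 'rV[R]_n.

Lemma comb_sum (als : seq 'rV[R]_n) :
  (forall b, b \in als -> exists c : 'I_(size S) -> nat,
      b = \sum_(i < size S) (c i)%:R *: S`_i /\ (1 <= \sum_i c i)%N) ->
  exists c : 'I_(size S) -> nat,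
      \sum_(b <- als) b = \sum_(i < size S) (c i)%:R *: S`_i /\ (size als <= \sum_i c i)%N.
Proof.
elim: als => [|b als IH] h.
  exists (fun _ => 0%N); split; first by rewrite big_nil big1 // => i _; rewrite scale0r.
  by [].
have [c1 [e1 s1]] := h b (mem_head _ _).
have [c2 [e2 s2]] : exists c : 'I_(size S) -> nat,
      \sum_(b <- als) b = \sum_(i < size S) (c i)%:R *: S`_i /\ (size als <= \sum_i c i)%N.
  by apply: IH => b' hb'; apply: h; rewrite in_cons hb' orbT.
exists (fun i => c1 i + c2 i)%N; split.
  rewrite big_cons e1 e2 -big_split /=; apply: eq_bigr => i _.
  by rewrite natrD scalerDl.
rewrite big_split /=; exact: (leq_add s1 s2).
Qed.

Lemma lin_indep_uniq (c d : 'I_(size S) -> nat) :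
  lin_indep S ->
  \sum_(i < size S) (c i)%:R *: S`_i = \sum_(i < size S) (d i)%:R *: S`_i ->
  forall i, c i = d i.
Proof.
move=> li e i.
have h := li (fun i => (c i)%:R - (d i)%:R).
have : \sum_(i < size S) ((c i)%:R - (d i)%:R) *: S`_i = 0 :> 'rV[R]_n.
  under eq_bigr do rewrite scalerBl.
  by rewrite sumrB e subrr.
move/h => /(_ i) /eqP; rewrite subr_eq0 eqr_nat => /eqP.
by [].
Qed.

End C.
Section D.
Variables (R : realType) (n : nat) (Phi S : seq 'rV[R]_n).

Lemma simple_pos x : simple_system Phi S -> x \in S -> positive_root Phi S x.
Proof.
case=> sub _ _ xS; split; first exact: sub.
have i0lt : (index x S < size S)%N by rewrite index_mem.
set i0 : 'I_(size S) := Ordinal i0lt.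
exists (fun i => (i == i0 : nat)).
rewrite (bigD1 i0) //= eqxx scale1r big1 ?addr0.
  by rewrite /= nth_index.
by move=> i /negbTE ->; rewrite scale0r.
Qed.

Lemma simple_in_Ik (Rg : set 'rV[R]_n) k :
  is_root_system Phi -> simple_system Phi S ->
  (forall a, positive_root Phi S a -> exists s, r_alpha k (theta Phi S Rg) a s) ->
  forall x, x \in S -> theta Phi S Rg k x.
Proof.
move=> [h0 _ _ _] ss hr x xS.
have px := simple_pos x ss xS.
have [s [[als [rs [hsz hall hI hx _]]] _]] := hr x px.
have hcomb : forall b, b \in als -> exists c : 'I_(size S) -> nat,
      b = \sum_(i < size S) (c i)%:R *: S`_i /\ (1 <= \sum_i c i)%N.
  move=> b hb.
  have := hI (index b als); rewrite index_mem hb nth_index // => /(_ isT).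
  move=> [[bP [c hc]] _]; exists c; split => //.
  rewrite lt0n; apply/negP => /eqP /eqP; rewrite sum_nat_eq0 => /forallP hz.
  move: h0; rewrite -(_ : b = 0) ?bP //.
  rewrite hc big1 // => i _; by have /implyP /(_ isT) /eqP -> := hz i; rewrite scale0r.
have [c [ec sc]] := @comb_sum R n S _ hcomb.
have i0lt : (index x S < size S)%N by rewrite index_mem.
set i0 : 'I_(size S) := Ordinal i0lt.
have ex : x = \sum_(i < size S) (i == i0 : nat)%:R *: S`_i.
  rewrite (bigD1 i0) //= eqxx scale1r big1 ?addr0.
    by rewrite /= nth_index.
  by move=> i /negbTE ->; rewrite scale0r.
have li : lin_indep S by case: ss.
have hc := @lin_indep_uniq R n S _ _ li (etrans (esym ec) (etrans (esym hx) ex)).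
have s1 : (\sum_i c i = 1)%N.
  rewrite (bigD1 i0) //= hc eqxx big1 // => i /negbTE hi; by rewrite hc hi.
have xPhi : x \in Phi by case: px => ->.
case: als hsz hI hx sc {hcomb ec} => [|b [|b' als]].
- by move=> _ _ hx; move: h0; rewrite big_nil in hx; rewrite -hx xPhi.
- idtac.
  case: rs hall => [|r [|r' rs]] //= /andP[/andP[r1 rk] _] _ hI hx _.
  rewrite big_seq1 in hx; clear ex hc i0 i0lt; subst x; have := hI 0%N isT; rewrite /= => -[pxx hlt].
  split => // y Ry; apply: (lt_le_trans (hlt y Ry)); by rewrite ler_nat.
- by rewrite s1.
Qed.
End D.
Section E.
Variables (R : realType) (n : nat) (k : nat) (I J : nat -> set 'rV[R]_n).
Hypothesis hIJ : forall i, (1 <= i <= k)%N -> J i = I i.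

Lemma ach_up a s : r_achievable k I a s -> r_achievable k.+1 J a s.
Proof.
move=> [als [rs [hsz hall hI hx hs]]]; exists als, rs; split => //.
  apply/allP => r /(allP hall) /andP[r1 rk]; rewrite r1 /=; exact: leqW.
move=> j hj; rewrite hIJ; first exact: hI.
by apply: (allP hall); apply: mem_nth; rewrite -hsz.
Qed.

Hypothesis k0 : (0 < k)%N.
Hypothesis hJ : forall x, J k.+1 x ->
  (exists i1 i2 a b, [/\ (1 <= i1)%N && (1 <= i2)%N, (i1 + i2 = k.+1)%N, I i1 a, I i2 b & x = a + b])
  \/ I k x.

Lemma ach_down_seq (als : seq 'rV[R]_n) (rs : seq nat) :
  size als = size rs -> all (fun r => (1 <= r <= k.+1)%N) rs ->
  (forall j, (j < size als)%N -> J (nth 0%N rs j) (nth 0 als j)) ->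
  exists als' rs', [/\ size als' = size rs', all (fun r => (1 <= r <= k)%N) rs',
     (forall j, (j < size als')%N -> I (nth 0%N rs' j) (nth 0 als' j)),
     \sum_(b <- als') b = \sum_(b <- als) b & (sumn rs' <= sumn rs)%N].
Proof.
elim: als rs => [|b als IH] [|r rs] //=.
  by move=> _ _ _; exists [::], [::]; split.
move=> [hsz] /andP[/andP[r1 rk] hall] hI.
have [als' [rs' [hsz' hall' hI' hsum hle]]] :
  exists als' rs', [/\ size als' = size rs', all (fun r => (1 <= r <= k)%N) rs',
     (forall j, (j < size als')%N -> I (nth 0%N rs' j) (nth 0 als' j)),
     \sum_(b <- als') b = \sum_(b <- als) b & (sumn rs' <= sumn rs)%N].
  by apply: IH => // j hj; apply: (hI j.+1).
have Jb := hI 0%N isT; rewrite /= in Jb.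
have [rk'|rk'] := leqP r k.
  exists (b :: als'), (r :: rs'); split => /=; first by rewrite hsz'.
  - by rewrite r1 rk' hall'.
  - case=> [|j] /= hj; last exact: hI'.
    by rewrite -hIJ ?r1 ?rk'.
  - by rewrite !big_cons hsum.
  - by rewrite leq_add2l.
have er : r = k.+1 by apply/eqP; rewrite eqn_leq rk rk'.
rewrite er in Jb *.
case: (hJ b Jb) => [[i1 [i2 [a [c [/andP[i11 i21] hi hIa hIc ->]]]]]|hk].
  exists (a :: c :: als'), (i1 :: i2 :: rs'); split => /=; first by rewrite hsz'.
  - rewrite i11 i21 hall' /= !andbT; apply/andP; split; lia.
  - by case=> [|[|j]] /= hj; last exact: hI'.
  - by rewrite !big_cons hsum addrA.
  - rewrite addnA hi leq_add2l //.
exists (b :: als'), (k :: rs'); split => /=; first by rewrite hsz'.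
- by rewrite k0 leqnn hall'.
- by case=> [|j] /= hj; last exact: hI'.
- by rewrite !big_cons hsum.
- by rewrite leq_add // leqW.
Qed.

Lemma ach_down a s : r_achievable k.+1 J a s ->
  exists2 s', r_achievable k I a s' & (s' <= s)%N.
Proof.
move=> [als [rs [hsz hall hI hx hs]]].
have [als' [rs' [hsz' hall' hI' hsum hle]]] := ach_down_seq _ _ hsz hall hI.
exists (sumn rs'); last by rewrite hs.
by exists als', rs'; split => //; rewrite hsum.
Qed.

Lemma r_alpha_eq a s s' : r_alpha k I a s -> r_alpha k.+1 J a s' -> s = s'.
Proof.
move=> [h1 m1] [h2 m2]; apply/eqP; rewrite eqn_leq.
have [s'' h3 h4] := ach_down _ _ h2.
rewrite (leq_trans (m1 _ h3) h4) /=.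
exact: m2 (ach_up _ _ h1).
Qed.
End E.

Theorem proposition11 (R : realType) (n : nat) (Phi S : seq 'rV[R]_n) (k : nat)
    (Rg : set 'rV[R]_n) :
  is_root_system Phi -> crystallographic Phi -> irreducible_rs Phi ->
  simple_system Phi S -> (0 < k)%N ->
  catalan_region Phi k Rg -> dominant Phi S Rg -> bounded_set Rg ->
  forall B B' : set 'rV[R]_n,
    maximal_alcove Phi S k Rg B -> pseudomaximal_alcove Phi S k Rg B' -> B' = B.
Proof.
move=> rs cr irr ss k0 reg dom bnd B B' [alcB hB] [Rg' [reg' dom' bnd' ceq [alcB' hB']]].
rewrite /chain_eq in ceq.
have hS : forall x, x \in S -> theta Phi S Rg k x.
  apply: simple_in_Ik => // a pa; have [s h _] := hB a pa; by exists s.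
have hIJ : forall i, (1 <= i <= k)%N -> theta Phi S Rg' i = theta Phi S Rg i.
  move=> i /andP[i1 ik]; rewrite ceq; last by rewrite i1 (leqW ik).
  by rewrite /underline_chain ik.
have hJ : forall x, theta Phi S Rg' k.+1 x ->
  (exists i1 i2 a b, [/\ (1 <= i1)%N && (1 <= i2)%N, (i1 + i2 = k.+1)%N,
     theta Phi S Rg i1 a, theta Phi S Rg i2 b & x = a + b])
  \/ theta Phi S Rg k x.
  move=> x; rewrite ceq; last by rewrite ltnSn andbT.
  rewrite /underline_chain ltnn /=.
  case. case=> i1 [i2 [a [b [hh _]]]]; left; exists i1, i2, a, b; exact hh. case=> h; right; [exact h| by apply: hS].
have req : forall a, positive_root Phi S a ->
    exists r, alcove_r B a r /\ alcove_r B' a r.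
  move=> a pa; have [s h1 h2] := hB a pa; have [s' h1' h2'] := hB' a pa.
  have e := @r_alpha_eq R n k _ _ hIJ k0 hJ _ _ _ h1 h1'.
  by exists (Posz s); split => //; rewrite e.
apply/seteqP; split; apply: (@alcove_sub R n Phi S _ _ rs ss) => // a pa;
  have [r [h1 h2]] := req a pa; by exists r.
Qed.
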